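(* Let $k\ge 2$, $D'=\{0,1,\dots,k\}$ and $D=\{1,\dots,k\}$. The class of $k$-submodular functions on $D'$ is persistent with respect to the integral domain $D$: for every $k$-submodular $f:(D')^n\to\mathbb{R}$ and every minimiser $X^*$ of $f$ over $(D')^n$, there is a minimiser $X$ of $f$ over $D^n$ such that $X_i=X^*_i$ for every coordinate $i$ with $X^*_i\ne 0$. Furthermore, the class contains all hard constants from $D$: for each $d\in D$ there is a unary $k$-submodular function $f_d$ on $D'$ which has $v=d$ as its unique minimum.
   Context: Define symmetric idempotent operations $\sqcap,\sqcup$ on $D'=\{0,\dots,k\}$ by $0\sqcap x=0$, $0\sqcup x=x$, $x\sqcap x=x\sqcup x=x$, and $x\sqcap y=x\sqcup y=0$ for distinct $x,y\in D'\setminus\{0\}$. A function $f:(D')^r\to\mathbb{R}$ is $k$-submodular if $f(X)+f(Y)\ge f(X\sqcap Y)+f(X\sqcup Y)$ for all $X,Y\in(D')^r$, the operations applied coordinatewise. *)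

(* Defs.v *)
From mathcomp Require Import all_boot all_order all_algebra.
From mathcomp Require Import reals.
Set Implicit Arguments. Unset Strict Implicit. Unset Printing Implicit Defensive.
Import Order.TTheory GRing.Theory Num.Theory.
Local Open Scope ring_scope.

(* D' = {0,...,k} is 'I_k.+1 ; D = {1,...,k} are its nonzero elements. *)

Definition kmeet (k : nat) (x y : 'I_k.+1) : 'I_k.+1 :=
  if x == y then x else ord0.

Definition kjoin (k : nat) (x y : 'I_k.+1) : 'I_k.+1 :=
  if x == ord0 then y
  else if y == ord0 then x
  else if x == y then x else ord0.

Definition vmeet (k n : nat) (X Y : {ffun 'I_n -> 'I_k.+1}) : {ffun 'I_n -> 'I_k.+1} :=
  [ffun i => kmeet (X i) (Y i)].
Definition vjoin (k n : nat) (X Y : {ffun 'I_n -> 'I_k.+1}) : {ffun 'I_n -> 'I_k.+1} :=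
  [ffun i => kjoin (X i) (Y i)].

Definition ksubmodular (R : realType) (k n : nat) (f : {ffun 'I_n -> 'I_k.+1} -> R) : Prop :=
  forall X Y : {ffun 'I_n -> 'I_k.+1},
    f (vmeet X Y) + f (vjoin X Y) <= f X + f Y.

Definition integral (k n : nat) (X : {ffun 'I_n -> 'I_k.+1}) : Prop :=
  forall i, X i != ord0.

Definition is_min (R : realType) (k n : nat) (f : {ffun 'I_n -> 'I_k.+1} -> R)
  (X : {ffun 'I_n -> 'I_k.+1}) : Prop := forall Y, f X <= f Y.

Definition is_min_integral (R : realType) (k n : nat) (f : {ffun 'I_n -> 'I_k.+1} -> R)
  (X : {ffun 'I_n -> 'I_k.+1}) : Prop :=
  integral X /\ forall Y, integral Y -> f X <= f Y.

(* Main.v *)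
Require Import Defs.
From mathcomp Require Import all_boot all_order all_algebra.
From mathcomp Require Import reals lra.
Import Order.TTheory GRing.Theory Num.Theory.
Local Open Scope ring_scope.

Lemma exists_int_min (R : realType) (k n : nat) (hk : (1 <= k)%N)
  (f : {ffun 'I_n -> 'I_k.+1} -> R) :
  exists Y0, integral Y0 /\ forall Y, integral Y -> f Y0 <= f Y.
Proof.
set P : {pred {ffun 'I_n -> 'I_k.+1}} := [pred Y : {ffun 'I_n -> 'I_k.+1} | [forall i, Y i != ord0]].
have h1 : (inord 1 : 'I_k.+1) != ord0.
  by apply/eqP => /(congr1 val); rewrite /= inordK.
have Pi0 : P [ffun => inord 1] by apply/forallP => i; rewrite ffunE.
case: (arg_minP f Pi0) => Y0 PY0 HY.
exists Y0; split; first by move=> i; exact: (forallP PY0 i).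
by move=> Y iY; apply: HY; apply/forallP.
Qed.

Theorem lemma2 (R : realType) (k : nat) (hk : (2 <= k)%N) :
  (forall (n : nat) (f : {ffun 'I_n -> 'I_k.+1} -> R),
     ksubmodular f ->
     forall Xs : {ffun 'I_n -> 'I_k.+1}, is_min f Xs ->
     exists X : {ffun 'I_n -> 'I_k.+1},
       is_min_integral f X /\ (forall i, Xs i != ord0 -> X i = Xs i))
  /\
  (forall d : 'I_k.+1, d != ord0 ->
     exists fd : {ffun 'I_1 -> 'I_k.+1} -> R,
       ksubmodular fd /\
       forall X : {ffun 'I_1 -> 'I_k.+1},
         X != [ffun => d] -> fd [ffun => d] < fd X).
Proof.
split.
  move=> n f fsub Xs Xmin.
  have [Y0 [iY0 mY0]] := @exists_int_min R k n (ltnW hk) f.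
  set A := vjoin Xs Y0.
  have hA : f A <= f Y0.
    have := fsub Xs Y0; have := Xmin (vmeet Xs Y0). move=> h1 h2. lra.
  have hX : f (vjoin Xs A) <= f A.
    have := fsub Xs A; have := Xmin (vmeet Xs A). move=> h1 h2. lra.
  have eX : forall i, vjoin Xs A i = if Xs i == ord0 then Y0 i else Xs i.
    move=> i; rewrite /A !ffunE /kjoin.
    move: (Xs i) (Y0 i) => x y.
    idtac.
    case: (eqVneq x ord0) => [x0|x0]; first by subst x.
    case: (eqVneq y ord0) => [y0|y0]; first by rewrite (negbTE x0) eqxx.
    by case: (eqVneq x y) => [xy|xy]; rewrite ?(negbTE x0) ?eqxx.
  exists (vjoin Xs A); split; last first.
    by move=> i /negbTE x0; rewrite eX x0.
  split.
    by move=> i; rewrite eX; case: (eqVneq (Xs i) ord0) => [_|h] //; exact: iY0.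
  move=> Y iY; apply: (le_trans hX); apply: (le_trans hA); exact: mY0.
move=> d d0.
exists (fun X => if X ord0 == d then 0 else if X ord0 == ord0 then 1 else 2).
split.
  move=> X Y; rewrite /vmeet /vjoin !ffunE /kmeet /kjoin.
  move: (X ord0) (Y ord0) => x y.
  have nd : (ord0 == d) = false by apply/negbTE; rewrite eq_sym.
  case: (eqVneq x y) => [<-|xy]; rewrite ?eqxx.
    case: (eqVneq x ord0) => [->|x0]; first by rewrite nd eqxx; lra.
    by rewrite (negbTE x0); case: (x == d); lra.
  rewrite nd.
  case: (eqVneq x ord0) => [x0|x0].
    by subst x; rewrite nd lexx.
  case: (eqVneq y ord0) => [y0|y0].
    by subst y; rewrite nd (negbTE x0); case: (x == d); lra.
  rewrite nd eqxx.
  case: (eqVneq x d) => [xd|xd]; case: (eqVneq y d) => [yd|yd].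
  - by move: xy; rewrite xd yd eqxx.
  - lra.
  - lra.
  - lra.
move=> X Xd; rewrite ffunE eqxx.
have -> : (X ord0 == d) = false.
  apply/negbTE; apply: contra Xd => /eqP h; apply/eqP/ffunP => i.
  by rewrite ffunE (ord1 i).
by case: ifP => _; lra.
Qed.
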